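(* Let $\vartheta$ be a compatible, recognisable random substitution on an alphabet $\mathcal A$ with $d$ letters. Then $A_n\subseteq A_{n+1}$ for all $n\ge1$, and $A=\bigcup_{n\ge1}A_n$ is a normal subgroup of the shuffle group $\Gamma$ of index at most $2^d$.
   Context: A random substitution on a finite alphabet $\mathcal A$ is a map $\vartheta$ from $\mathcal A$ to non-empty finite sets of non-empty words, extended to words by concatenating choices and iterated; elements of $\vartheta^n(a)$ are level-$n$ inflation words of type $a$. $X_\vartheta\subseteq\mathcal A^{\mathbb Z}$ is the set of sequences all of whose subwords are legal (subwords of words in some $\vartheta^p(a)$), with shift $\sigma$. $\vartheta$ is compatible if for each $a$ all words in $\vartheta(a)$ have the same letter counts; a compatible $\vartheta$ is recognisable if each $x\in X_\vartheta$ has a unique $y\in X_\vartheta$ and unique $0\le k\le|\vartheta(y_0)|-1$ with $\sigma^{-k}(x)\in\vartheta(y)$ (where $\vartheta(y)$ is the set of sequences $\cdots w_{-1}w_0w_1\cdots$, $w_i\in\vartheta(y_i)$, $w_0$ starting at index 0). Then every $\vartheta^n$ is recognisable, so each $x$ is uniquely a bi-infinite concatenation of level-$n$ inflation words with uniquely determined positions and types. For a permutation $\alpha$ of $\vartheta^n(a)$, $f_\alpha\in\operatorname{Aut}(X_\vartheta)$ replaces each level-$n$ inflation word $u_i$ of type $a$ in this decomposition by $\alpha(u_i)$. $\Gamma_{n,a}=\{f_\alpha:\alpha\in\operatorname{Sym}(\vartheta^n(a))\}$, $\Gamma_n=\prod_a\Gamma_{n,a}$ (an increasing chain in $n$), $\Gamma=\bigcup_n\Gamma_n$.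 $A_{n,a}=\{f_\alpha:\alpha$ an even permutation of $\vartheta^n(a)\}$ and $A_n=\prod_a A_{n,a}$. *)

(* Defs.v *)
From HB Require Import structures.
From mathcomp Require Import all_boot all_order all_algebra all_fingroup.
From Stdlib Require Import ClassicalEpsilon.
Set Implicit Arguments. Unset Strict Implicit. Unset Printing Implicit Defensive.
Import GRing.Theory.

Section RandomSubstitution.
Variable A : finType.
(* a random substitution: each letter is sent to a (finite) set of words,
   represented by a list; membership gives the set. *)
Variable theta : A -> seq (seq A).

Definition wf_subst : Prop :=
  (forall a, theta a != [::]) /\ (forall a w, w \in theta a -> w != [::]).

Definition compatible : Prop :=
  forall a u v, u \in theta a -> v \in theta a ->
    forall b : A, count_mem b u = count_mem b v.

Definition subst_word (u : seq A) : seq (seq A) :=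
  foldr (fun b acc => [seq v ++ r | v <- theta b, r <- acc]) [:: [::]] u.

Definition infl (n : nat) (a : A) : seq (seq A) :=
  iter n (fun S => undup (flatten (map subst_word S))) [:: [:: a]].

(* common length of the words in theta^n(a) (well defined under compatibility) *)
Definition ilen (n : nat) (a : A) : nat := size (head [::] (infl n a)).

Definition legal (u : seq A) : Prop :=
  exists (p : nat) (a : A), has (fun v => infix u v) (infl p a).

Definition inX (x : int -> A) : Prop :=
  forall (i : int) (m : nat), legal [seq x (i + j%:Z)%R | j <- iota 0 m].

(* sigma^{-k} x, where (sigma x)_i = x_{i+1} *)
Definition shift (x : int -> A) (k : nat) : int -> A := fun i => x (i - k%:Z)%R.

(* z = ... w_{-1} w_0 w_1 ... with w_0 starting at index 0 *)
Definition concat_rel (w : int -> seq A) (z : int -> A) : Prop :=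
  exists s : int -> int, s 0%R = 0%R /\
    (forall i, s (i + 1)%R = (s i + (size (w i))%:Z)%R) /\
    (forall i, w i = [seq z (s i + j%:Z)%R | j <- iota 0 (size (w i))]).

(* z belongs to theta^n(y) *)
Definition inflseq (n : nat) (y z : int -> A) : Prop :=
  exists w : int -> seq A, (forall i, w i \in infl n (y i)) /\ concat_rel w z.

Definition recognisable : Prop :=
  forall x, inX x ->
    exists! p : (int -> A) * nat,
      inX p.1 /\ (p.2 < ilen 1 (p.1 0%R))%N /\ inflseq 1 p.1 (shift x p.2).

Definition app (S : seq (seq A)) (al : {perm seq_sub S}) (u : seq A) : seq A :=
  match (insub u : option (seq_sub S)) with
  | Some s => val (al s)
  | None => u
  end.

(* f_alpha: replace each level-n inflation word u of type a in the
   (recognisability) decomposition of x by alpha(u) *)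
Definition f_alpha (n : nat) (a : A) (al : {perm seq_sub (infl n a)})
    (x : int -> A) : int -> A :=
  epsilon (inhabits x) (fun x' =>
    exists (y : int -> A) (k : nat) (w : int -> seq A),
      inX y /\ (k < ilen n (y 0%R))%N /\
      (forall i, w i \in infl n (y i)) /\
      concat_rel w (shift x k) /\
      concat_rel (fun i => if y i == a then app al (w i) else w i) (shift x' k)).

(* maps are compared as maps on X_theta *)
Definition eqX (f g : (int -> A) -> (int -> A)) : Prop :=
  forall x, inX x -> f x = g x.

(* the element of Gamma_n = prod_a Gamma_{n,a} given by a family of permutations *)
Definition gprod (n : nat) (als : forall a : A, {perm seq_sub (infl n a)}) :
    (int -> A) -> (int -> A) :=
  foldr (fun a g => f_alpha (als a) \o g) id (enum A).

Definition GammaN (n : nat) (g : (int -> A) -> (int -> A)) : Prop :=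
  exists als : forall a : A, {perm seq_sub (infl n a)}, eqX g (gprod als).

Definition AltN (n : nat) (g : (int -> A) -> (int -> A)) : Prop :=
  exists als : forall a : A, {perm seq_sub (infl n a)},
    (forall a, ~~ odd_perm (als a)) /\ eqX g (gprod als).

Definition Gamma (g : (int -> A) -> (int -> A)) : Prop := exists n, GammaN n g.
Definition Alt (g : (int -> A) -> (int -> A)) : Prop :=
  exists n, (1 <= n)%N /\ AltN n g.

End RandomSubstitution.

(* Main.v *)
Require Import Defs.
From mathcomp Require Import all_boot all_order all_algebra all_fingroup zify.
From Stdlib Require Import ClassicalEpsilon FunctionalExtensionality Classical.
Set Implicit Arguments. Unset Strict Implicit. Unset Printing Implicit Defensive.
Import Order.TTheory GRing.Theory Num.Theory.

Local Open Scope ring_scope.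

Lemma intInd (P : int -> Prop) : P 0 -> (forall i, P i -> P (i + 1)) ->
  (forall i, P i -> P (i - 1)) -> forall i, P i.
Proof.
move=> P0 Hs Hp.
have H1 : forall n : nat, P n%:Z.
  elim=> // n IH; have := Hs _ IH; congr P; lia.
have H2 : forall n : nat, P (- n%:Z).
  elim=> [|n IH]; first by rewrite oppr0.
  have := Hp _ IH; congr P; lia.
move=> i; case: (lerP 0 i) => hi.
  have -> : i = `|i|%N%:Z by lia. exact: H1.
have -> : i = - `|i|%N%:Z by lia. exact: H2.
Qed.

Lemma iota_shift (s n : nat) : iota s n = [seq (s + j)%N | j <- iota 0 n].
Proof. by rewrite -{1}[s]addn0 iotaDl. Qed.

Section Pos.
Variable A : Type.
Implicit Types (w : int -> seq A) (o c i : int).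

Definition sz w c (m : nat) : nat := sumn [seq size (w (c + j%:Z)) | j <- iota 0 m].

Lemma sz0 w c : sz w c 0 = 0%N. Proof. by []. Qed.

Lemma szSr w c m : sz w c m.+1 = (sz w c m + size (w (c + m%:Z)%R))%N.
Proof. by rewrite /sz -addn1 iotaD map_cat sumn_cat /= addn0. Qed.

Lemma szSl w c m : sz w c m.+1 = (size (w c) + sz w (c + 1)%R m)%N.
Proof.
rewrite /sz /= addr0; congr (_ + _)%N.
rewrite -[1%N]addn0 iotaDl -map_comp; congr sumn; apply/eq_in_map => j _ /=.
by congr (size (w _)); lia.
Qed.

Definition pos w o i : int :=
  if 0 <= i then o + (sz w 0 `|i|%N)%:Z else o - (sz w i `|i|%N)%:Z.

Lemma pos0 w o : pos w o 0 = o.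
Proof. by rewrite /pos lexx /= addr0. Qed.

Lemma posS w o i : pos w o (i + 1) = pos w o i + (size (w i))%:Z.
Proof.
rewrite /pos; case: (lerP 0 i) => hi.
  have -> : (0 <= i + 1) = true by apply/idP; lia.
  have -> : `|(i + 1)%R|%N = `|i|%N.+1 by lia.
  rewrite szSr; have -> : 0 + `|i|%N%:Z = i by lia. lia.
case: (lerP 0 (i + 1)) => hi1.
  have -> : i = -1 by lia.
  have -> : `|((-1 + 1 : int))%R|%N = 0%N by []. 
  rewrite /= sz0 /= (szSl w (-1) 0) sz0. lia.
have -> : `|i|%N = `|(i + 1)%R|%N.+1 by lia.
rewrite szSl; lia.
Qed.

Lemma posP w o i : pos w o (i - 1) = pos w o i - (size (w (i - 1)))%:Z.
Proof. by rewrite -{2}(subrK 1 i) posS addrK. Qed.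

Lemma pos_uniq w o (s : int -> int) : s 0 = o ->
  (forall i, s (i + 1) = s i + (size (w i))%:Z) -> forall i, s i = pos w o i.
Proof.
move=> s0 sS; apply: intInd; first by rewrite pos0.
  by move=> i IH; rewrite sS posS IH.
move=> i IH; apply: (@addIr _ (size (w (i - 1)))%:Z).
by rewrite -sS -posS !subrK.
Qed.

Lemma pos_o w o i : pos w o i = o + pos w 0 i.
Proof.
symmetry; apply: (pos_uniq (s := fun i => o + pos w 0 i)); first by rewrite pos0 addr0.
by move=> j; rewrite posS addrA.
Qed.

Lemma pos_ext w w' o : (forall i, size (w i) = size (w' i)) -> forall i, pos w o i = pos w' o i.
Proof.
move=> H; apply: pos_uniq; first exact: pos0.
by move=> j; rewrite posS H.
Qed.

Lemma pos_add w o c (m : nat) : pos w o (c + m%:Z) = pos w o c + (sz w c m)%:Z.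
Proof.
elim: m => [|m IH]; first by rewrite addr0 sz0 addr0.
have -> : c + m.+1%:Z = (c + m%:Z) + 1 by lia.
by rewrite posS IH szSr; lia.
Qed.

Definition rs (T : Type) (f : int -> T) (c : int) := fun i => f (i + c).

Lemma pos_rs w o c i : pos (rs w c) (pos w o c) i = pos w o (i + c).
Proof.
symmetry; apply: (pos_uniq (s := fun i => pos w o (i + c))); first by rewrite add0r.
by move=> j; rewrite /rs -posS; congr pos; lia.
Qed.

Lemma pos_gap w o i j : i < j -> pos w o i + (size (w i))%:Z <= pos w o j.
Proof.
move=> hij; have -> : j = (i + 1) + `|(j - i - 1)%R|%N%:Z by lia.
rewrite pos_add posS; lia.
Qed.

Lemma pos_le w o i j : i <= j -> pos w o i <= pos w o j.
Proof.
move=> hij; have -> : j = i + `|(j - i)%R|%N%:Z by lia.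
rewrite pos_add; lia.
Qed.

Definition inblk w o i (p : int) := pos w o i <= p < pos w o i + (size (w i))%:Z.

Lemma inblk_uniq w o i j p : inblk w o i p -> inblk w o j p -> i = j.
Proof.
rewrite /inblk => /andP[h1 h2] /andP[h3 h4].
case: (ltrgtP i j) => // hij.
  have := pos_gap w o hij; lia.
have := pos_gap w o hij; lia.
Qed.

Lemma blkcover w o : (forall i, (0 < size (w i))%N) -> forall p, exists i, inblk w o i p.
Proof.
move=> Hs.
suff H : forall q, exists i, inblk w o i (o + q).
  by move=> p; have [i Hi] := H (p - o); exists i; move: Hi; rewrite addrC subrK.
apply: intInd.
- exists 0; rewrite /inblk pos0 addr0; have := Hs 0; lia.
- move=> q [i]; rewrite /inblk => /andP[h1 h2].
  case: (ltrP (o + (q + 1)) (pos w o i + (size (w i))%:Z)) => h3.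
    exists i; apply/andP; split; lia.
  exists (i + 1); rewrite posS; have := Hs (i + 1); lia.
- move=> q [i]; rewrite /inblk => /andP[h1 h2].
  case: (lerP (pos w o i) (o + (q - 1))) => h3.
    exists i; apply/andP; split; lia.
  exists (i - 1); rewrite posP; have := Hs (i - 1); lia.
Qed.

Definition cr w (x : int -> A) o :=
  forall i, w i = [seq x (pos w o i + j%:Z) | j <- iota 0 (size (w i))].

Lemma map_iota_eq (T : Type) (f g : nat -> T) n k :
  [seq f j | j <- iota 0 n] = [seq g j | j <- iota 0 n] -> (k < n)%N -> f k = g k.
Proof.
move=> H hk; have := congr1 (nth (f k) ^~ k) H.
by rewrite !(nth_map 0%N) ?size_iota // nth_iota.
Qed.

Lemma cr_nth w x o i (k : nat) d : cr w x o -> (k < size (w i))%N ->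
  nth d (w i) k = x (pos w o i + k%:Z).
Proof.
move=> H hk; rewrite H (nth_map 0%N) ?size_iota // nth_iota //.
Qed.

Lemma cr_unique w x x' o : (forall i, (0 < size (w i))%N) -> cr w x o -> cr w x' o -> x = x'.
Proof.
move=> Hs H1 H2; apply: functional_extensionality => p.
have [i /andP[h1 h2]] := blkcover o Hs p.
have hk : (`|(p - pos w o i)%R|%N < size (w i))%N by lia.
have e := H1 i; rewrite {1}(H2 i) in e.
have := map_iota_eq e hk.
have -> : pos w o i + `|(p - pos w o i)%R|%N%:Z = p by lia.
by [].
Qed.

Lemma cr_exists w o : (forall i, (0 < size (w i))%N) -> exists x, cr w x o.
Proof.
move=> Hs; case e0: (w 0) (Hs 0) => [|a0 s0] // _.
pose bidx p := epsilon (inhabits 0) (fun i => inblk w o i p).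
have hb : forall p, inblk w o (bidx p) p.
  move=> p; apply: (epsilon_spec (inhabits 0) (fun i => inblk w o i p)).
  exact: blkcover.
exists (fun p => nth a0 (w (bidx p)) `|(p - pos w o (bidx p))%R|%N).
move=> i; rewrite -{1}(mkseq_nth a0 (w i)) /mkseq; apply/eq_in_map => j.
rewrite mem_iota => /andP[_ hj].
have hi : inblk w o i (pos w o i + j%:Z) by rewrite /inblk; apply/andP; split; lia.
rewrite -(inblk_uniq hi (hb _)).
by have -> : `|(pos w o i + j%:Z - pos w o i)%R|%N = j by lia.
Qed.

Lemma cr_det w w' x o : cr w x o -> cr w' x o -> (forall i, size (w i) = size (w' i)) -> w = w'.
Proof.
move=> H1 H2 Hs; apply: functional_extensionality => i.
by rewrite H1 H2 Hs (pos_ext o Hs).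
Qed.

Lemma cr_shiftx w x o c : cr w (fun p => x (p + c)) o <-> cr w x (o + c).
Proof.
have E : forall i (j : nat), pos w o i + j%:Z + c = pos w (o + c) i + j%:Z.
  by move=> i j; rewrite (pos_o w o) (pos_o w (o + c)); lia.
split => H i; rewrite {1}H; apply/eq_in_map => j _ //=; by rewrite E.
Qed.

Lemma cr_rs w x o c : cr w x o -> cr (rs w c) x (pos w o c).
Proof.
move=> H i; rewrite pos_rs /rs; exact: H.
Qed.

Lemma size_flat_blocks (B : int -> seq A) c m :
  size (flatten [seq B (c + j%:Z) | j <- iota 0 m]) = sz B c m.
Proof. by rewrite size_flatten /shape -map_comp. Qed.

Lemma cr_flat B x p c m : cr B x p ->
  flatten [seq B (c + j%:Z) | j <- iota 0 m] =
  [seq x (pos B p c + j%:Z) | j <- iota 0 (sz B c m)].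
Proof.
move=> H; elim: m => [|m IH] //.
rewrite szSr -addn1 iotaD map_cat flatten_cat IH /= cats0 iotaD map_cat; congr (_ ++ _).
rewrite add0n (iota_shift (sz B c m)) -map_comp {1}H pos_add.
apply/eq_in_map => j _ /=; congr x; lia.
Qed.

Lemma cr_group B x p (t : int -> int) (L : int -> nat) :
  (forall i, t (i + 1) = t i + (L i)%:Z) -> cr B x p ->
  cr (fun i => flatten [seq B (t i + j%:Z) | j <- iota 0 (L i)]) x (pos B p (t 0)).
Proof.
move=> tS H.
set G := fun i => _.
have hp : forall i, pos B p (t i) = pos G (pos B p (t 0)) i.
  apply: (pos_uniq (s := fun i => pos B p (t i))) => // i.
  by rewrite tS pos_add /G size_flat_blocks.
move=> i; rewrite -hp {2}/G size_flat_blocks /G.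
exact: cr_flat.
Qed.

End Pos.

Lemma concat_rel_cr (A : finType) (w : int -> seq A) x (k : nat) :
  concat_rel w (shift x k) <-> cr w x (- k%:Z).
Proof.
split.
  move=> [s [s0 [sS sw]]].
  have hs := pos_uniq s0 sS.
  move=> i; rewrite {1}sw; apply/eq_in_map => j _; rewrite /shift hs.
  by congr x; rewrite (pos_o w (- k%:Z)); lia.
move=> H; exists (pos w 0); split; first exact: pos0.
split; first by move=> i; rewrite posS.
move=> i; rewrite {1}(H i); apply/eq_in_map => j _; rewrite /shift.
by congr x; rewrite (pos_o w (- k%:Z)); lia.
Qed.

Local Close Scope ring_scope.

Section Words.
Variable A : finType.
Implicit Types (f g h : A -> seq (seq A)) (u v W : seq A).

Definition sw f (u : seq A) : seq (seq A) :=
  foldr (fun b acc => [seq v ++ r | v <- f b, r <- acc]) [:: [::]] u.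

Lemma sw_cons f c u W : W \in sw f (c :: u) <->
  exists v r, [/\ v \in f c, r \in sw f u & W = v ++ r].
Proof.
split.
  by move=> /allpairsP [[v r] /= [h1 h2 ->]]; exists v, r.
by move=> [v [r [h1 h2 ->]]]; apply/allpairsP; exists (v, r).
Qed.

Lemma sw_nil f W : W \in sw f [::] <-> W = [::].
Proof. by rewrite inE; split => /eqP. Qed.

Lemma sw_cat f u1 u2 W : W \in sw f (u1 ++ u2) <->
  exists W1 W2, [/\ W1 \in sw f u1, W2 \in sw f u2 & W = W1 ++ W2].
Proof.
elim: u1 W => [|c u1 IH] W.
  split; first by move=> h; exists [::], W; split => //; apply/sw_nil.
  move=> [W1 [W2 [h1 h2 ->]]]; move/sw_nil: h1 => ->; exact: h2.
rewrite (sw_cons f c (u1 ++ u2)); split.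
  move=> [v [r [hv /IH [W1 [W2 [h1 h2 ->]]] ->]]].
  exists (v ++ W1), W2; split => //; last by rewrite catA.
  by apply/sw_cons; exists v, W1.
move=> [W1 [W2 [/sw_cons [v [r [hv hr ->]]] h2 ->]]].
exists v, (r ++ W2); split => //; last by rewrite catA.
by apply/IH; exists r, W2.
Qed.

Lemma sw_comp f g h : (forall c W, W \in h c <-> exists U, U \in f c /\ W \in sw g U) ->
  forall v W, W \in sw h v <-> exists U, U \in sw f v /\ W \in sw g U.
Proof.
move=> Hh; elim=> [|c v IH] W.
  split; first by move=> /sw_nil ->; exists [::]; split; apply/sw_nil.
  by move=> [U [/sw_nil -> /sw_nil ->]]; apply/sw_nil.
rewrite sw_cons; split.
  move=> [W1 [W2 [/Hh [U1 [hU1 hW1]] /IH [U2 [hU2 hW2]] ->]]].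
  exists (U1 ++ U2); split; first by apply/sw_cons; exists U1, U2.
  by apply/sw_cat; exists W1, W2.
move=> [U [/sw_cons [U1 [U2 [hU1 hU2 ->]]] /sw_cat [W1 [W2 [h1 h2 ->]]]]].
exists W1, W2; split => //.
  by apply/Hh; exists U1.
by apply/IH; exists U2.
Qed.

Lemma sw_single v W : W \in sw (fun c => [:: [:: c]]) v <-> W = v.
Proof.
elim: v W => [|c v IH] W; first exact: sw_nil.
rewrite sw_cons; split.
  by move=> [x [r [/[!inE] /eqP -> /IH -> ->]]].
by move=> ->; exists [:: c], v; split => //; [rewrite inE | apply/IH].
Qed.

Lemma sw_ex f u : (forall c, exists v, v \in f c) -> exists W, W \in sw f u.
Proof.
move=> H; elim: u => [|c u [r hr]]; first by exists [::]; apply/sw_nil.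
have [v hv] := H c; exists (v ++ r); apply/sw_cons; by exists v, r.
Qed.

Lemma sw_infix f u v W : (forall c, exists x, x \in f c) -> infix u v -> W \in sw f u ->
  exists W', W' \in sw f v /\ infix W W'.
Proof.
move=> Hf /infixP [s [s' ->]] hW.
have [Ws hs] := sw_ex s Hf; have [Ws' hs'] := sw_ex s' Hf.
exists (Ws ++ W ++ Ws'); split; last exact: infix_infix.
apply/sw_cat; exists Ws, (W ++ Ws'); split => //.
by apply/sw_cat; exists W, Ws'.
Qed.

Lemma sw_all2 f u W : W \in sw f u <->
  exists ws, all2 (fun c w => w \in f c) u ws /\ W = flatten ws.
Proof.
elim: u W => [|c u IH] W.
  split; first by move=> /sw_nil ->; exists [::].
  by move=> [[|w ws] [] //= _ ->]; apply/sw_nil.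
rewrite sw_cons; split.
  move=> [v [r [hv /IH [ws [h1 ->]] ->]]].
  by exists (v :: ws); rewrite /= hv h1.
move=> [ws [h ->]]; case: ws h => [|w ws] //= /andP [hw h1].
exists w, (flatten ws); split => //; apply/IH; by exists ws.
Qed.

Variable theta : A -> seq (seq A).

Lemma sw_theta u : subst_word theta u = sw theta u.
Proof. by []. Qed.

Lemma infl0 a : infl theta 0 a = [:: [:: a]].
Proof. by []. Qed.

Lemma inflS n a W : W \in infl theta n.+1 a <->
  exists U, U \in infl theta n a /\ W \in sw theta U.
Proof.
rewrite /infl iterS -/(infl theta n a) mem_undup; split.
  by move=> /flattenP [s /mapP [U hU ->] hW]; exists U.
move=> [U [hU hW]]; apply/flattenP; exists (sw theta U) => //.
by apply/mapP; exists U.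
Qed.

Lemma infl_add q m a W : W \in infl theta (q + m) a <->
  exists v, v \in infl theta q a /\ W \in sw (infl theta m) v.
Proof.
elim: m W => [|m IH] W.
  rewrite addn0; change (sw (infl theta 0)) with (sw (fun c => [:: [:: c]])).
  split; first by move=> h; exists W; split => //; apply/sw_single.
  by move=> [v [hv /sw_single ->]].
rewrite addnS inflS; split.
  move=> [U [/IH [v [hv hU]] hW]]; exists v; split => //.
  apply/(sw_comp (f := infl theta m) (g := theta)); first by move=> c W'; exact: inflS.
  by exists U.
move=> [v [hv /(sw_comp (f := infl theta m) (g := theta) (fun c W' => inflS m c W'))]].
move=> [U [hU hW]]; exists U; split => //; apply/IH; by exists v.
Qed.

Lemma infl1 a W : W \in infl theta 1 a <-> W \in theta a.
Proof.
rewrite inflS; split.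
  move=> [U [/[!inE] /eqP -> /sw_cons [v [r [hv /sw_nil -> ->]]]]].
  by rewrite cats0.
move=> h; exists [:: a]; split; first by rewrite inE.
by apply/sw_cons; exists W, [::]; rewrite cats0; split => //; apply/sw_nil.
Qed.

Lemma inflS1 n b W : W \in infl theta n.+1 b <->
  exists v, v \in theta b /\ W \in sw (infl theta n) v.
Proof.
rewrite -add1n infl_add; split.
  by move=> [v [/infl1 h1 h2]]; exists v.
by move=> [v [h1 h2]]; exists v; split => //; apply/infl1.
Qed.

Hypothesis Hwf : wf_subst theta.
Hypothesis Hcomp : compatible theta.

Lemma theta_ex c : exists v, v \in theta c.
Proof. by case: Hwf => H _; case e: (theta c) (H c) => [|v s] // _; exists v; rewrite mem_head. Qed.

Lemma infl_ex n a : exists W, W \in infl theta n a.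
Proof.
elim: n a => [|n IH] a; first by exists [:: a]; rewrite inE.
have [U hU] := IH a; have [W hW] := sw_ex U theta_ex.
by exists W; apply/inflS; exists U.
Qed.

Lemma infl_size n a W : W \in infl theta n a -> (0 < size W)%N.
Proof.
elim: n a W => [|n IH] a W; first by rewrite inE => /eqP ->.
move=> /inflS [[|c U] [/IH // hU /sw_cons [v [r [hv _ ->]]]]].
case: Hwf => _ /(_ _ _ hv); by case: v {hv}.
Qed.

Lemma theta_perm c u v : u \in theta c -> v \in theta c -> perm_eq u v.
Proof.
move=> hu hv; rewrite /perm_eq; apply/allP => x _ /=; apply/eqP; exact: (Hcomp hu hv).
Qed.

Lemma sw_count f (P : pred A) u W :
  (forall c u v, u \in f c -> v \in f c -> perm_eq u v) ->
  W \in sw f u -> count P W = sumn [seq count P (head [::] (f c)) | c <- u].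
Proof.
move=> Hp; elim: u W => [|c u IH] W; first by move=> /sw_nil ->.
move=> /sw_cons [v [r [hv hr ->]]].
rewrite count_cat (IH _ hr) /=; congr (_ + _)%N.
have hh : head [::] (f c) \in f c by case: (f c) hv => // x s _; rewrite mem_head.
suff /seq.permP -> : perm_eq v (head [::] (f c)) by []. exact: Hp hv hh.
Qed.

Lemma sw_perm f U U' W W' :
  (forall c u v, u \in f c -> v \in f c -> perm_eq u v) ->
  perm_eq U U' -> W \in sw f U -> W' \in sw f U' -> perm_eq W W'.
Proof.
move=> Hp hU hW hW'; apply/seq.permP => P.
rewrite (sw_count P Hp hW) (sw_count P Hp hW'); apply: perm_sumn; exact: perm_map.
Qed.

Lemma infl_perm n a u v : u \in infl theta n a -> v \in infl theta n a -> perm_eq u v.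
Proof.
elim: n a u v => [|n IH] a u v.
  by rewrite !inE => /eqP -> /eqP ->.
move=> /inflS [U [hU hu]] /inflS [V [hV hv]].
exact: (sw_perm theta_perm (IH _ _ _ hU hV) hu hv).
Qed.

Lemma infl_head n a : head [::] (infl theta n a) \in infl theta n a.
Proof.
have [W hW] := infl_ex n a; by case: (infl theta n a) hW => // x s _; rewrite mem_head.
Qed.

Lemma infl_len n a u : u \in infl theta n a -> size u = ilen theta n a.
Proof.
move=> hu; rewrite /ilen; apply: perm_size; apply: infl_perm hu _; exact: infl_head.
Qed.

Lemma ilen_pos n a : (0 < ilen theta n a)%N.
Proof. exact: (infl_size (infl_head n a)). Qed.

End Words.

Local Open Scope ring_scope.

Lemma all2_size (S T : Type) (r : S -> T -> bool) s t : all2 r s t -> size s = size t.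
Proof. by elim: s t => [|x s IH] [|y t] //= /andP [_ /IH ->]. Qed.

Lemma all2_nth (S T : Type) (r : S -> T -> bool) s t x0 y0 (j : nat) :
  all2 r s t -> (j < size s)%N -> r (nth x0 s j) (nth y0 t j).
Proof.
elim: s t j => [|x s IH] [|y t] [|j] //= /andP [h1 h2] hj //; exact: IH.
Qed.

Lemma all2_map (S T U : Type) (r : S -> T -> bool) (f : U -> S) (g : U -> T) s :
  all2 r (map f s) (map g s) = all (fun j => r (f j) (g j)) s.
Proof. by elim: s => //= x s ->. Qed.

Lemma pos_group (A : Type) (B : int -> seq A) p (t : int -> int) (L : int -> nat) :
  (forall i, t (i + 1) = t i + (L i)%:Z) ->
  forall i, pos (fun k => flatten [seq B (t k + j%:Z) | j <- iota 0 (L k)]) (pos B p (t 0)) i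
   = pos B p (t i).
Proof.
move=> tS i; symmetry; apply: (pos_uniq (s := fun i => pos B p (t i))) => [//|k].
by rewrite tS pos_add size_flat_blocks.
Qed.

Definition win (A : Type) (x : int -> A) (p : int) (m : nat) := [seq x (p + j%:Z) | j <- iota 0 m].

Lemma win_split (A : Type) (x : int -> A) p (a b : nat) :
  win x p (a + b) = win x p a ++ win x (p + a%:Z) b.
Proof.
rewrite /win iotaD map_cat add0n (iota_shift a) -map_comp; congr (_ ++ _).
apply/eq_in_map => j _ /=; congr x; lia.
Qed.

Section XX.
Variable A : finType.
Variable theta : A -> seq (seq A).
Hypothesis Hwf : wf_subst theta.
Hypothesis Hcomp : compatible theta.
Hypothesis Hrec : recognisable theta.

Notation inX := (inX theta).
Notation infl := (infl theta).
Notation ilen := (ilen theta).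

Definition dec n (x y : int -> A) o (w : int -> seq A) :=
  [/\ inX y, forall i, w i \in infl n (y i) & cr w x o].

Definition nrm n (y : int -> A) (o : int) := - (ilen n (y 0))%:Z < o <= 0.

Lemma inX_rs y c : inX y -> inX (rs y c).
Proof.
move=> H i m; have := H (i + c) m; congr legal; apply/eq_in_map => j _.
by rewrite /rs; congr y; lia.
Qed.

Lemma legal_infix u v : legal theta v -> infix u v -> legal theta u.
Proof.
move=> [p [a /hasP [W hW hv]]] huv; exists p, a; apply/hasP; exists W => //.
exact: infix_trans huv hv.
Qed.

Lemma dec_size n x y o w i : dec n x y o w -> (0 < size (w i))%N.
Proof. by case=> _ H _; exact: (infl_size Hwf (H i)). Qed.

Lemma dec_len n x y o w i : dec n x y o w -> size (w i) = ilen n (y i).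
Proof. by case=> _ H _; exact: (infl_len Hwf Hcomp (H i)). Qed.

Lemma dec_inX n x y o w : dec n x y o w -> inX x.
Proof.
move=> D; case: (D) => hy hw hc p m.
case: m => [|m].
  exists 0%N, (x 0); apply/hasP; exists [:: x 0]; first by rewrite inE.
  exact: infix0s.
have Hs := fun i => dec_size i D.
have [i1 /andP [a1 b1]] := blkcover o Hs p.
have [i2 /andP [a2 b2]] := blkcover o Hs (p + m%:Z).
have h12 : i1 <= i2.
  case: (lerP i1 i2) => // h; have := pos_gap w o h; lia.
set N := (`|(i2 - i1)%R|%N.+1).
have hfl := cr_flat i1 N hc.
have hS : pos w o i1 + (sz w i1 N)%:Z = pos w o i2 + (size (w i2))%:Z.
  by rewrite -pos_add -posS; congr pos; lia.
have hwin : infix (win x p m.+1) (win x (pos w o i1) (sz w i1 N)).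
  have -> : sz w i1 N = (`|(p - pos w o i1)%R|%N + (m.+1 + `|(pos w o i1 + (sz w i1 N)%:Z - p - m.+1%:Z)%R|%N))%N by lia.
  rewrite !win_split; have -> : pos w o i1 + `|(p - pos w o i1)%R|%N%:Z = p by lia.
  exact: infix_infix.
have hly : legal theta (win y i1 N) by exact: hy.
move: hly => [P [a /hasP [V hV hinf]]].
have hW : flatten [seq w (i1 + j%:Z) | j <- iota 0 N] \in sw (infl n) (win y i1 N).
  apply/sw_all2; exists [seq w (i1 + j%:Z) | j <- iota 0 N]; split => //.
  by rewrite /win all2_map; apply/allP => j _.
have [W' [hW' hinf']] := sw_infix (fun c => infl_ex Hwf n c) hinf hW.
have hW2 : W' \in infl (P + n) a by apply/infl_add; exists V.
exists (P + n)%N, a; apply/hasP; exists W' => //.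
apply: infix_trans hinf'; rewrite hfl; exact: hwin.
Qed.

Lemma dec_rs n x y o w c : dec n x y o w -> dec n x (rs y c) (pos w o c) (rs w c).
Proof.
case=> hy hw hc; split; first exact: inX_rs.
  by move=> i; exact: hw.
exact: cr_rs.
Qed.

Lemma dec_norm n x y o w : dec n x y o w ->
  exists c, dec n x (rs y c) (pos w o c) (rs w c) /\ nrm n (rs y c) (pos w o c).
Proof.
move=> D; have [c /andP [h1 h2]] := blkcover o (fun i => dec_size i D) 0.
exists c; split; first exact: dec_rs.
rewrite /nrm /rs add0r -(dec_len c D); apply/andP; split; lia.
Qed.

Lemma dec0 x : inX x -> dec 0 x x 0 (fun i => [:: x i]).
Proof.
move=> hx; split => //; first by move=> i; rewrite inE.
have hp : forall i, i = pos (fun i => [:: x i]) 0 i.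
  by apply: (pos_uniq (s := id)).
by move=> i; rewrite -hp /= addr0.
Qed.

Lemma dec_ex n x : inX x -> exists y o w, dec n x y o w.
Proof.
elim: n x => [|n IH] x hx; first by exists x, 0, (fun i => [:: x i]); exact: dec0.
have [u [p [B D]]] := IH x hx.
case: (D) => hu hB hcB.
have [[y k] [[/= hy [hk [V [hV hcV]]]] _]] := Hrec hu.
move/concat_rel_cr: hcV => hcV.
pose t := pos V (- k%:Z).
have tS : forall i, t (i + 1) = t i + (size (V i))%:Z by move=> i; rewrite /t posS.
exists y, (pos B p (t 0)), (fun i => flatten [seq B (t i + j%:Z) | j <- iota 0 (size (V i))]).
split => //; last exact: cr_group.
move=> i; apply/inflS1; exists (V i); split; first exact/infl1.
apply/sw_all2; exists [seq B (t i + j%:Z) | j <- iota 0 (size (V i))]; split => //.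
have e := hcV i; rewrite {1}e all2_map; apply/allP => j _; exact: hB.
Qed.

Lemma dec_exN n x : inX x -> exists y o w, dec n x y o w /\ nrm n y o.
Proof.
move=> hx; have [y [o [w D]]] := dec_ex n hx.
have [c [D' N']] := dec_norm D; by exists (rs y c), (pos w o c), (rs w c).
Qed.

Definition Uniq n := forall x y o w y' o' w', dec n x y o w -> dec n x y' o' w' ->
  exists c, [/\ y' = rs y c, o' = pos w o c & w' = rs w c].

Definition NUniq n := forall x y o w y' o' w', dec n x y o w -> nrm n y o ->
  dec n x y' o' w' -> nrm n y' o' -> [/\ y' = y, o' = o & w' = w].

Lemma rs0 (T : Type) (f : int -> T) : rs f 0 = f.
Proof. by apply: functional_extensionality => i; rewrite /rs addr0. Qed.

Lemma rsrs (T : Type) (f : int -> T) c d : rs (rs f c) d = rs f (d + c).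
Proof. by apply: functional_extensionality => i; rewrite /rs addrA. Qed.

Lemma NU_of_U n : Uniq n -> NUniq n.
Proof.
move=> U x y o w y' o' w' D N D' N'.
have [c [ey eo ew]] := U _ _ _ _ _ _ _ D D'.
suff c0 : c = 0 by rewrite c0 !rs0 pos0 in ey eo ew.
move: N N'; rewrite /nrm ey eo /rs add0r -(dec_len 0 D) -(dec_len c D).
case: (ltrgtP c 0) => // hc.
  have := pos_gap w o hc; rewrite pos0 => h0 /andP[h1 h2] /andP[h3 h4]; set s0 := size (w 0) in h0 h1 h2 h3 h4 *; lia.
have := pos_gap w o hc; rewrite pos0 => h0 /andP[h1 h2] /andP[h3 h4]; set s0 := size (w 0) in h0 h1 h2 h3 h4 *; lia.
Qed.

Lemma U_of_NU n : NUniq n -> Uniq n.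
Proof.
move=> NU x y o w y' o' w' D D'.
have [c1 [D1 N1]] := dec_norm D; have [c2 [D2 N2]] := dec_norm D'.
have [ey eo ew] := NU _ _ _ _ _ _ _ D1 N1 D2 N2.
exists (c1 - c2).
have ey' : y' = rs y (c1 - c2).
  apply: functional_extensionality => i; have := congr1 (fun f => f (i - c2)) ey.
  by rewrite /rs subrK => ->; congr y; lia.
have ew' : w' = rs w (c1 - c2).
  apply: functional_extensionality => i; have := congr1 (fun f => f (i - c2)) ew.
  by rewrite /rs subrK => ->; congr w; lia.
split => //.
have := pos_rs w' o' c2 (- c2); rewrite addNr pos0 => <-.
by rewrite ew eo pos_rs; congr pos; lia.
Qed.

Lemma NU1 : NUniq 1.
Proof.
move=> x y o w y' o' w' D N D' N'.
case: (D) => hy hw hc; case: (D') => hy' hw' hc'.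
have hk : o = - `|o|%N%:Z by move: N => /andP[]; lia.
have hk' : o' = - `|o'|%N%:Z by move: N' => /andP[]; lia.
have hx : inX x := dec_inX D.
have [p [_ Hu]] := Hrec hx.
have E1 : p = (y, `|o|%N).
  apply: Hu; split => //=; split.
    move: N; rewrite /nrm => /andP[h1 h2].
    have : (`|o|%N < ilen 1 (y 0%R))%N by lia.
    by [].
  by exists w; split => //; apply/concat_rel_cr; rewrite -hk.
have E2 : p = (y', `|o'|%N).
  apply: Hu; split => //=; split.
    move: N'; rewrite /nrm => /andP[h1 h2].
    have : (`|o'|%N < ilen 1 (y' 0%R))%N by lia.
    by [].
  by exists w'; split => //; apply/concat_rel_cr; rewrite -hk'.
move: E2; rewrite E1 => -[ey eo].
have eo' : o' = o by rewrite hk hk' eo.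
split => //.
subst; apply: (cr_det hc' hc) => i.
by rewrite (dec_len i D) (dec_len i D').
Qed.

End XX.

Local Open Scope ring_scope.

Lemma choice_int (T : Type) (d : T) (P : int -> T -> Prop) :
  (forall i, exists t, P i t) -> exists f : int -> T, forall i, P i (f i).
Proof.
move=> H; exists (fun i => epsilon (inhabits d) (P i)) => i.
exact: epsilon_spec.
Qed.

Section App.
Variable A : finType.
Variable S : seq (seq A).
Implicit Types (al bl : {perm seq_sub S}).

Lemma app_val al (s : seq_sub S) : app al (val s) = val (al s).
Proof. by rewrite /app valK. Qed.

Lemma app_out al u : u \notin S -> app al u = u.
Proof. by move=> hu; rewrite /app insubN. Qed.

Lemma app_in al u : u \in S -> app al u \in S.
Proof. by rewrite /app; case: insubP => [s _ _|//] _; exact: ssvalP. Qed.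

Lemma app_mul al bl u : app al (app bl u) = app (bl * al) u.
Proof.
case: (boolP (u \in S)) => hu; last by rewrite !app_out.
have -> : u = val (Sub u hu : seq_sub S) by [].
by rewrite !app_val permM.
Qed.

Lemma app_one u : app (1 : {perm seq_sub S}) u = u.
Proof.
case: (boolP (u \in S)) => hu; last by rewrite !app_out.
have -> : u = val (Sub u hu : seq_sub S) by [].
by rewrite app_val perm1.
Qed.

Lemma app_eq al bl : (forall u, u \in S -> app al u = app bl u) -> al = bl.
Proof.
move=> H; apply/permP => s; apply: val_inj; rewrite -!app_val; apply: H; exact: ssvalP.
Qed.

End App.

Section Lev.
Variable A : finType.
Variable theta : A -> seq (seq A).
Hypothesis Hwf : wf_subst theta.
Hypothesis Hcomp : compatible theta.
Hypothesis Hrec : recognisable theta.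

Notation inX := (inX theta).
Notation infl := (infl theta).
Notation ilen := (ilen theta).
Notation dec := (dec theta).
Notation nrm := (nrm theta).

Lemma theta_size c v : v \in theta c -> (0 < size v)%N.
Proof. by move=> hv; case: Hwf => _ /(_ c v hv); case: v {hv}. Qed.

Lemma dec_refine n x y o W (V : int -> seq A) (ws : int -> seq (seq A)) :
  dec n.+1 x y o W -> (forall i, V i \in theta (y i)) ->
  (forall i, all2 (fun c w => w \in infl n c) (V i) (ws i)) ->
  (forall i, W i = flatten (ws i)) ->
  exists u B, [/\ dec n x u o B, dec 1 u y 0 V &
    forall i, [seq B (pos V 0 i + j%:Z) | j <- iota 0 (size (V i))] = ws i].
Proof.
move=> D hV hws hW.
have hVs : forall i, (0 < size (V i))%N by move=> i; exact: theta_size (hV i).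
have [u hu] := cr_exists 0 hVs.
pose bidx m := epsilon (inhabits 0) (fun i => inblk V 0 i m).
have hb : forall m, inblk V 0 (bidx m) m.
  move=> m; apply: (epsilon_spec (inhabits 0) (fun i => inblk V 0 i m)).
  exact: blkcover.
pose B m := nth [::] (ws (bidx m)) `|(m - pos V 0 (bidx m))%R|%N.
have hB : forall i (j : nat), (j < size (V i))%N -> B (pos V 0 i + j%:Z) = nth [::] (ws i) j.
  move=> i j hj; have hi : inblk V 0 i (pos V 0 i + j%:Z) by rewrite /inblk; apply/andP; split; lia.
  rewrite /B -(inblk_uniq hi (hb _)).
  by have -> : `|(pos V 0 i + j%:Z - pos V 0 i)%R|%N = j by lia.
have hBs : forall i, [seq B (pos V 0 i + j%:Z) | j <- iota 0 (size (V i))] = ws i.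
  move=> i; rewrite -(mkseq_nth [::] (ws i)) /mkseq -(all2_size (hws i)).
  apply/eq_in_map => j; rewrite mem_iota => /andP [_ hj]; exact: hB.
have hBin : forall m, B m \in infl n (u m).
  move=> m; have /andP [h1 h2] := hb m; set i := bidx m in h1 h2.
  set j := `|(m - pos V 0 i)%R|%N.
  have hj : (j < size (V i))%N by rewrite /j; lia.
  have em : m = pos V 0 i + j%:Z by rewrite /j; lia.
  rewrite {1}em hB // em -(cr_nth (u m) hu hj).
  exact: (all2_nth (u m) [::] (hws i) hj).
have hBsz : forall m, (0 < size (B m))%N by move=> m; have := infl_size Hwf (hBin m); exact.
have [x' hx'] := cr_exists o hBsz.
have hg := cr_group (t := pos V 0) (L := fun i => size (V i)) (fun i => posS V 0 i) hx'.
rewrite pos0 pos0 in hg.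
have eW : (fun i => flatten [seq B (pos V 0 i + j%:Z) | j <- iota 0 (size (V i))]) = W.
  by apply: functional_extensionality => i; rewrite hBs hW.
rewrite eW in hg.
case: (D) => hy hWin hcW.
have ex : x' = x by apply: (cr_unique (fun i => dec_size Hwf i D) hg hcW).
subst x'.
have D1 : dec 1 u y 0 V by split => // i; apply/infl1.
exists u, B; split => //; split => //; exact: (dec_inX Hwf D1).
Qed.

Lemma U0 : Uniq theta 0.
Proof.
move=> x y o w y' o' w' [hy hw hc] [hy' hw' hc'].
have ew : forall i, w i = [:: y i] by move=> i; have := hw i; rewrite inE => /eqP.
have ew' : forall i, w' i = [:: y' i] by move=> i; have := hw' i; rewrite inE => /eqP.
have hp : forall i, o + i = pos w o i.
  by apply: (pos_uniq (s := fun i => o + i)); [rewrite addr0 | move=> i; rewrite ew addrA].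
have hp' : forall i, o' + i = pos w' o' i.
  by apply: (pos_uniq (s := fun i => o' + i)); [rewrite addr0 | move=> i; rewrite ew' addrA].
have hx : forall i, y i = x (o + i).
  by move=> i; have := hc i; rewrite ew -hp /= addr0 => -[].
have hx' : forall i, y' i = x (o' + i).
  by move=> i; have := hc' i; rewrite ew' -hp' /= addr0 => -[].
have ey : y' = rs y (o' - o).
  by apply: functional_extensionality => i; rewrite hx' /rs hx; congr x; lia.
exists (o' - o); split => //.
  by rewrite -hp; lia.
by apply: functional_extensionality => i; rewrite ew' /rs ew ey.
Qed.

Lemma Uall n : Uniq theta n.
Proof.
elim: n => [|n IH]; first exact: U0.
move=> x y o W y' o' W' D D'.
have hch : forall (y : int -> A) (W : int -> seq A), (forall i, W i \in infl n.+1 (y i)) ->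
    exists f : int -> seq A * seq (seq A), forall i,
    [/\ (f i).1 \in theta (y i), all2 (fun c w => w \in infl n c) (f i).1 (f i).2 & W i = flatten (f i).2].
  move=> y0 W0 H.
  apply: (choice_int ([::], [::]) (P := fun i (p : seq A * seq (seq A)) =>
    [/\ p.1 \in theta (y0 i), all2 (fun c w => w \in infl n c) p.1 p.2 & W0 i = flatten p.2])) => i.
  have /inflS1 [v [hv /sw_all2 [ws [h1 h2]]]] := H i.
  by exists (v, ws).
case: (D) => _ hW _; case: (D') => _ hW' _.
have [f hf] := hch _ _ hW; have [f' hf'] := hch _ _ hW'.
have hf1 : forall i, (f i).1 \in theta (y i) by move=> i; case: (hf i).
have hf2 : forall i, all2 (fun c w => w \in infl n c) (f i).1 (f i).2 by move=> i; case: (hf i).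
have hf3 : forall i, W i = flatten (f i).2 by move=> i; case: (hf i).
have hf1' : forall i, (f' i).1 \in theta (y' i) by move=> i; case: (hf' i).
have hf2' : forall i, all2 (fun c w => w \in infl n c) (f' i).1 (f' i).2 by move=> i; case: (hf' i).
have hf3' : forall i, W' i = flatten (f' i).2 by move=> i; case: (hf' i).
have [u [B [DB DV hB]]] := dec_refine D hf1 hf2 hf3.
have [u' [B' [DB' DV' hB']]] := dec_refine D' hf1' hf2' hf3'.
have [c [eu eo eB]] := IH _ _ _ _ _ _ _ DB DB'.
have DV2 : dec 1 u y' (0 + c) (fun i => (f' i).1).
  case: DV' => h1 h2 h3; split => //; apply/cr_shiftx; rewrite eu in h3; exact: h3.
have [d [ey ec eV]] := U_of_NU Hwf Hcomp (NU1 Hwf Hcomp Hrec) DV DV2.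
exists d.
have eW : W = (fun i => flatten [seq B (pos (fun i => (f i).1) 0 i + j%:Z) | j <- iota 0 (size (f i).1)]).
  by apply: functional_extensionality => i; rewrite hB hf3.
have ho' : o' = pos W o d.
  rewrite eo eW; rewrite add0r in ec; rewrite ec.
  have := pos_group B o (fun i => posS (fun i => (f i).1) 0 i) d.
  by rewrite !pos0 => ->.
split => //.
case: (D') => _ _ hc'; case: (D) => _ _ hc.
apply: (cr_det hc'); first by rewrite ho'; exact: cr_rs.
by move=> i; rewrite (dec_len Hwf Hcomp i D') /rs (dec_len Hwf Hcomp (i + d) D) ey.
Qed.

Lemma NUall n : NUniq theta n.
Proof. exact: (@NU_of_U _ _ Hwf Hcomp n (@Uall n)). Qed.

Lemma fa_spec n a (al : {perm seq_sub (infl n a)}) x y o w : dec n x y o w -> nrm n y o ->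
  dec n (f_alpha al x) y o (fun i => if y i == a then app al (w i) else w i).
Proof.
move=> D N; case: (D) => hy hw hc.
set w' := fun i => _.
have hw' : forall i, w' i \in infl n (y i).
  move=> i; rewrite /w'; case: eqP => [e|_] //; move: (hw i); rewrite e; exact: app_in.
have hs' : forall i, (0 < size (w' i))%N by move=> i; have := infl_size Hwf (hw' i).
have [x1 hx1] := cr_exists o hs'.
have hk : o = - `|o|%N%:Z by move: N => /andP[]; lia.
pose Pr := (fun x' => exists (y0 : int -> A) (k : nat) (w0 : int -> seq A),
  inX y0 /\ (k < ilen n (y0 0%R))%N /\ (forall i, w0 i \in infl n (y0 i)) /\
  concat_rel w0 (shift x k) /\
  concat_rel (fun i => if y0 i == a then app al (w0 i) else w0 i) (shift x' k)).
have E : f_alpha al x = epsilon (inhabits x) Pr by [].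
have ex : exists x', Pr x'.
  exists x1, y, `|o|%N, w; split => //; split.
    by move: N => /andP [h1 h2]; have : (`|o|%N < ilen n (y 0%R))%N by lia.
  split => //; split; first by apply/concat_rel_cr; rewrite -hk.
  by apply/concat_rel_cr; rewrite -hk.
have := epsilon_spec (inhabits x) Pr ex; rewrite -E.
move=> [y2 [k2 [w2 [hy2 [hk2 [hw2 [hc2 hc2']]]]]]].
move/concat_rel_cr: hc2 => hc2; move/concat_rel_cr: hc2' => hc2'.
have D2 : dec n x y2 (- k2%:Z) w2 by split.
have N2 : nrm n y2 (- k2%:Z) by rewrite /nrm; apply/andP; split; lia.
have [ey eo ew] := NUall D N D2 N2.
subst; split => //; rewrite -eo; exact: hc2'.
Qed.

Lemma gl_spec n (als : forall a, {perm seq_sub (infl n a)}) (l : seq A) x y o w :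
  uniq l -> dec n x y o w -> nrm n y o ->
  dec n (foldr (fun a g => f_alpha (als a) \o g) id l x) y o
    (fun i => if y i \in l then app (als (y i)) (w i) else w i).
Proof.
move=> + D N; elim: l => [|a l IH] /=.
  by move=> _; have -> : (fun i => if y i \in [::] then app (als (y i)) (w i) else w i) = w
    by apply: functional_extensionality => i; rewrite in_nil.
move=> /andP [ha hl]; have D1 := IH hl.
have := fa_spec (als a) D1 N.
congr dec; apply: functional_extensionality => i.
rewrite inE; case: eqP => [e|ne] /=.
  have hl' : y i \notin l by rewrite e.
  by rewrite (negbTE hl') e.
by [].
Qed.

Lemma gprod_spec n (als : forall a, {perm seq_sub (infl n a)}) x y o w :
  dec n x y o w -> nrm n y o ->
  dec n (gprod als x) y o (fun i => app (als (y i)) (w i)).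
Proof.
move=> D N; have := gl_spec als (enum_uniq A) D N.
congr dec; apply: functional_extensionality => i; by rewrite mem_enum.
Qed.

End Lev.

Local Open Scope ring_scope.

Lemma zip_map2 (S T U : Type) (f : U -> S) (g : U -> T) s :
  zip (map f s) (map g s) = map (fun j => (f j, g j)) s.
Proof. by elim: s => //= x s ->. Qed.

Section Grp.
Variable A : finType.
Variable theta : A -> seq (seq A).
Hypothesis Hwf : wf_subst theta.
Hypothesis Hcomp : compatible theta.
Hypothesis Hrec : recognisable theta.

Notation inX := (inX theta).
Notation infl := (infl theta).
Notation ilen := (ilen theta).
Notation dec := (dec theta).
Notation nrm := (nrm theta).

Definition Fam n := forall a : A, {perm seq_sub (infl n a)}.
Definition famM n (F G : Fam n) : Fam n := fun a => (F a * G a)%g.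
Definition famV n (F : Fam n) : Fam n := fun a => (F a)^-1%g.
Definition fam1 n : Fam n := fun a => 1%g.

Lemma dec_eq n x1 x2 y o w : dec n x1 y o w -> dec n x2 y o w -> x1 = x2.
Proof.
move=> D1 D2; case: (D1) => _ _ h1; case: (D2) => _ _ h2.
exact: (cr_unique (fun i => dec_size Hwf i D1) h1 h2).
Qed.

Lemma g_inX n (F : Fam n) x : inX x -> inX (gprod F x).
Proof.
move=> hx; have [y [o [w [D N]]]] := dec_exN Hwf Hcomp Hrec n hx.
exact (dec_inX Hwf (gprod_spec Hwf Hcomp Hrec F D N)).
Qed.

Lemma g_comp n (F G : Fam n) x : inX x -> gprod F (gprod G x) = gprod (famM G F) x.
Proof.
move=> hx; have [y [o [w [D N]]]] := dec_exN Hwf Hcomp Hrec n hx.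
have D1 := gprod_spec Hwf Hcomp Hrec G D N.
have D2 := gprod_spec Hwf Hcomp Hrec F D1 N.
have D3 := gprod_spec Hwf Hcomp Hrec (famM G F) D N.
apply: dec_eq D2 _; move: D3; congr dec.
by apply: functional_extensionality => i; rewrite app_mul.
Qed.

Lemma g_one n x : inX x -> gprod (fam1 n) x = x.
Proof.
move=> hx; have [y [o [w [D N]]]] := dec_exN Hwf Hcomp Hrec n hx.
have D1 := gprod_spec Hwf Hcomp Hrec (fam1 n) D N.
apply: dec_eq D1 _; move: D; congr dec.
by apply: functional_extensionality => i; rewrite app_one.
Qed.

Lemma fam_ext n (F G : Fam n) : (forall a, F a = G a) -> F = G.
Proof. move=> H; exact: functional_extensionality_dep. Qed.

Lemma g_inv n (F : Fam n) x : inX x -> gprod (famV F) (gprod F x) = x.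
Proof.
move=> hx; rewrite g_comp //.
have -> : famM F (famV F) = fam1 n by apply: fam_ext => a; rewrite /famM /famV mulgV.
exact: g_one.
Qed.

Lemma g_inv' n (F : Fam n) x : inX x -> gprod F (gprod (famV F) x) = x.
Proof.
move=> hx; rewrite g_comp //.
have -> : famM (famV F) F = fam1 n by apply: fam_ext => a; rewrite /famM /famV mulVg.
exact: g_one.
Qed.

Definition occurs (b : A) := exists y, inX y /\ y 0 = b.

Lemma occurs_in y i : inX y -> occurs (y i).
Proof. move=> hy; exists (rs y i); split; [exact: inX_rs | by rewrite /rs add0r]. Qed.

Definition mkw m (y : int -> A) (W : seq A) : int -> seq A :=
  fun i => if i == 0 then W else head [::] (infl m (y i)).

Lemma mkx m y b W : inX y -> y 0 = b -> W \in infl m b ->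
  exists x, dec m x y 0 (mkw m y W) /\ nrm m y 0.
Proof.
move=> hy hb hW.
have hin : forall i, mkw m y W i \in infl m (y i).
  move=> i; rewrite /mkw; case: eqP => [->|_]; [by rewrite hb | exact: infl_head Hwf m (y i)].
have hs : forall i, (0 < size (mkw m y W i))%N by move=> i; have := infl_size Hwf (hin i).
have [x hx] := cr_exists 0 hs.
exists x; split; first by split.
rewrite /nrm lexx andbT; have := ilen_pos Hwf m (y 0); lia.
Qed.

Lemma faithfulX m (F G : Fam m) : eqX theta (gprod F) (gprod G) -> forall b, occurs b -> F b = G b.
Proof.
move=> E b [y [hy hb]]; apply: app_eq => W hW.
have [x [D N]] := mkx hy hb hW.
have D1 := gprod_spec Hwf Hcomp Hrec F D N.
have D2 := gprod_spec Hwf Hcomp Hrec G D N.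
rewrite E in D1; last exact (dec_inX Hwf D).
have [_ _ ew] := NUall Hwf Hcomp Hrec D1 N D2 N.
have := congr1 (fun f => f 0) ew; rewrite /= /mkw eqxx.
by rewrite hb.
Qed.

Variable n : nat.

Definition chP (b : A) (W : seq A) (p : seq A * seq (seq A)) :=
  [/\ p.1 \in theta b, all2 (fun c w => w \in infl n c) p.1 p.2 & W = flatten p.2].

Definition ch b W := epsilon (inhabits ([::], [::])) (chP b W).

Lemma ch_spec b W : W \in infl n.+1 b -> chP b W (ch b W).
Proof.
move=> /inflS1 [v [hv /sw_all2 [ws [h1 h2]]]].
apply: (epsilon_spec (inhabits ([::], [::])) (chP b W)); by exists (v, ws).
Qed.

Definition Lf (F : Fam n) b W :=
  flatten [seq app (F q.1) q.2 | q <- zip (ch b W).1 (ch b W).2].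

Lemma all2_app (F : Fam n) v ws : all2 (fun c w => w \in infl n c) v ws ->
  all2 (fun c w => w \in infl n c) v [seq app (F q.1) q.2 | q <- zip v ws].
Proof.
elim: v ws => [|c v IH] [|w ws] //= /andP [h1 h2]; rewrite IH // andbT.
exact: app_in.
Qed.

Lemma Lf_in (F : Fam n) b W : W \in infl n.+1 b -> Lf F b W \in infl n.+1 b.
Proof.
move=> hW; have [h1 h2 h3] := ch_spec hW.
apply/inflS1; exists (ch b W).1; split => //; apply/sw_all2.
by eexists; split; [exact: all2_app h2 | by []].
Qed.

Lemma dec_gen n' (F : Fam n') x u o B : dec n' x u o B ->
  cr (fun m => app (F (u m)) (B m)) (gprod F x) o.
Proof.
move=> D; have [c [D1 N1]] := dec_norm Hwf Hcomp D.
have D2 := gprod_spec Hwf Hcomp Hrec F D1 N1.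
case: D2 => _ _ h; have := cr_rs (- c) h.
have -> : pos (fun i => app (F (rs u c i)) (rs B c i)) (pos B o c) (- c) = o.
  rewrite (pos_ext _ (w' := rs B c)); first by rewrite pos_rs addNr pos0.
  move=> i; rewrite /rs; case: (D) => _ hB _.
  by rewrite (infl_len Hwf Hcomp (hB _)) (infl_len Hwf Hcomp (app_in _ (hB _))).
have -> : rs (fun i => app (F (rs u c i)) (rs B c i)) (- c) = (fun m => app (F (u m)) (B m)).
  by apply: functional_extensionality => i; rewrite /rs subrK.
by [].
Qed.

Lemma G_eq (F : Fam n) x y o W : dec n.+1 x y o W ->
  dec n.+1 (gprod F x) y o (fun i => Lf F (y i) (W i)).
Proof.
move=> D; case: (D) => hy hW hc.
pose f i := ch (y i) (W i).
have hf1 : forall i, (f i).1 \in theta (y i) by move=> i; case: (ch_spec (hW i)).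
have hf2 : forall i, all2 (fun c w => w \in infl n c) (f i).1 (f i).2 by move=> i; case: (ch_spec (hW i)).
have hf3 : forall i, W i = flatten (f i).2 by move=> i; case: (ch_spec (hW i)).
have [u [B [DB DV hB]]] := dec_refine Hwf D hf1 hf2 hf3.
have hg := dec_gen F DB.
have hg2 := cr_group (t := pos (fun i => (f i).1) 0) (L := fun i => size (f i).1)
  (fun i => posS _ 0 i) hg.
rewrite !pos0 in hg2.
split => //; first by move=> i; exact: Lf_in.
move: hg2; congr cr; apply: functional_extensionality => i.
rewrite /Lf -/(f i); congr flatten.
case: DV => _ _ hcV.
rewrite -(hB i) {2}(hcV i) zip_map2 -map_comp; apply/eq_in_map => j _ /=.
by [].
Qed.

End Grp.

Local Open Scope ring_scope.

Section HomEven.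
Variables T T' : finType.
Variable phi : {perm T} -> {perm T'}.
Hypothesis phiM : forall s t, phi (s * t)%g = (phi s * phi t)%g.

Lemma phi1 : phi 1%g = 1%g.
Proof.
have h := phiM 1 1; rewrite mulg1 in h.
by have := congr1 (fun z => ((phi 1)^-1 * z)%g) h; rewrite mulKg mulVg => <-.
Qed.

Lemma phiV_odd s : odd_perm (phi s^-1%g) = odd_perm (phi s).
Proof.
have := congr1 (@odd_perm _) (phiM s^-1 s); rewrite mulVg phi1 odd_perm1 odd_permM.
by case: (odd_perm (phi s^-1)); case: (odd_perm (phi s)).
Qed.

Lemma phi_tperm x y x' y' : x != y -> x' != y' ->
  odd_perm (phi (tperm x y)) = odd_perm (phi (tperm x' y')).
Proof.
move=> hxy hxy'.
set y1 := tperm x x' y.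
have hy1 : x' != y1.
  apply/eqP => e; move: hxy; rewrite eq_sym; apply/negP; rewrite negbK; apply/eqP.
  apply: (@perm_inj _ (tperm x x')); by rewrite -/y1 -e tpermL.
pose pi := (tperm x x' * tperm y1 y')%g.
have hpx : pi x = x' by rewrite /pi permM tpermL tpermD // eq_sym.
have hpy : pi y = y' by rewrite /pi permM -/y1 tpermL.
have e : tperm x' y' = (tperm x y ^ pi)%g by rewrite tpermJ hpx hpy.
rewrite e conjgE phiM phiM !odd_permM phiV_odd.
by case: (odd_perm (phi pi)); case: (odd_perm (phi (tperm x y))).
Qed.

Lemma phi_even s : ~~ odd_perm s -> ~~ odd_perm (phi s).
Proof.
case: (prod_tpermP s) => ts -> hts.
rewrite odd_perm_prod //.
case: ts hts => [|t0 ts0] hts.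
  by rewrite big_nil phi1 odd_perm1.
set c := odd_perm (phi (tperm t0.1 t0.2)).
have ht0 : t0.1 != t0.2 by move: hts => /andP [].
suff H : forall ts', all dpair ts' ->
    odd_perm (phi (\prod_(t <- ts') tperm t.1 t.2)%g) = odd (size ts') && c.
  by move=> ho; rewrite H // (negbTE ho).
elim=> [|t ts IH] /=; first by rewrite big_nil phi1 odd_perm1.
move=> /andP [ht hts'].
rewrite big_cons phiM odd_permM IH // (phi_tperm ht ht0) -/c.
by case: (c); case: (odd (size ts)).
Qed.

End HomEven.

Section Lift.
Variable A : finType.
Variable theta : A -> seq (seq A).
Hypothesis Hwf : wf_subst theta.
Hypothesis Hcomp : compatible theta.
Hypothesis Hrec : recognisable theta.

Notation inX := (inX theta).
Notation infl := (infl theta).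
Notation dec := (dec theta).
Notation Fam := (Fam theta).
Notation occurs := (occurs theta).

Variable n : nat.

Lemma Lf_inj (F : Fam n) b W1 W2 : occurs b -> W1 \in infl n.+1 b -> W2 \in infl n.+1 b ->
  Lf F b W1 = Lf F b W2 -> W1 = W2.
Proof.
move=> [y [hy hb]] h1 h2 e.
have [x1 [D1 N1]] := mkx Hwf hy hb h1.
have [x2 [D2 N2]] := mkx Hwf hy hb h2.
have G1 := G_eq Hwf Hcomp Hrec F D1.
have G2 := G_eq Hwf Hcomp Hrec F D2.
have eg : gprod F x1 = gprod F x2.
  apply: (dec_eq Hwf G1); move: G2; congr dec.
  apply: functional_extensionality => i; rewrite /mkw; case: (eqVneq i 0) => [->|_] //.
  by rewrite hb e.
have ex : x1 = x2.
  by rewrite -(g_inv Hwf Hcomp Hrec F (dec_inX Hwf D1)) eg (g_inv Hwf Hcomp Hrec F (dec_inX Hwf D2)).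
subst x2; case: D1 => _ _ c1; case: D2 => _ _ c2.
have : mkw theta n.+1 y W1 = mkw theta n.+1 y W2.
  apply: (cr_det c1 c2) => i; rewrite /mkw; case: (eqVneq i 0) => [_|_] //.
  by rewrite (infl_len Hwf Hcomp h1) (infl_len Hwf Hcomp h2).
by move/(congr1 (fun f => f 0)); rewrite /mkw eqxx.
Qed.

Definition Lsub (F : Fam n) b (s : seq_sub (infl n.+1 b)) : seq_sub (infl n.+1 b) :=
  Sub (Lf F b (val s)) (Lf_in F (ssvalP s)).
Arguments Lsub F b s : clear implicits.

Lemma Lsub_inj (F : Fam n) b : occurs b -> injective (Lsub F b).
Proof.
move=> hb s1 s2 /(congr1 val) /= e; apply: val_inj.
exact: (Lf_inj hb (ssvalP s1) (ssvalP s2) e).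
Qed.

Definition Lp (F : Fam n) : Fam n.+1 := fun b =>
  match excluded_middle_informative (occurs b) with
  | left h => perm (@Lsub_inj F b h)
  | right _ => 1%g
  end.

Lemma Lp_app (F : Fam n) b W : occurs b -> W \in infl n.+1 b -> app (Lp F b) W = Lf F b W.
Proof.
move=> hb hW; rewrite /Lp; case: excluded_middle_informative => [h|//].
have -> : W = val (Sub W hW : seq_sub (infl n.+1 b)) by [].
by rewrite app_val permE.
Qed.

Lemma Lp_nocc (F : Fam n) b : ~ occurs b -> Lp F b = 1%g.
Proof. by move=> hb; rewrite /Lp; case: excluded_middle_informative. Qed.

Lemma Lp_eqX (F : Fam n) : eqX theta (gprod (Lp F)) (gprod F).
Proof.
move=> x hx; have [y [o [W [D N]]]] := dec_exN Hwf Hcomp Hrec n.+1 hx.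
have D1 := gprod_spec Hwf Hcomp Hrec (Lp F) D N.
have D2 := G_eq Hwf Hcomp Hrec F D.
apply: (dec_eq Hwf D1); move: D2; congr dec.
apply: functional_extensionality => i; case: (D) => hy hW _.
by rewrite Lp_app //; exact: occurs_in.
Qed.

Lemma Lp_hom (F G : Fam n) b : Lp (famM F G) b = (Lp F b * Lp G b)%g.
Proof.
case: (classic (occurs b)) => hb; last by rewrite !Lp_nocc // mulg1.
have := faithfulX Hwf Hcomp Hrec (F := Lp (famM F G)) (G := famM (Lp F) (Lp G)) _ hb.
apply => x hx.
rewrite Lp_eqX // -g_comp // -(g_comp Hwf Hcomp Hrec) //.
rewrite Lp_eqX; last exact: g_inX.
by rewrite Lp_eqX.
Qed.

Lemma Lp_one b : Lp (fam1 theta n) b = 1%g.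
Proof.
case: (classic (occurs b)) => hb; last by rewrite !Lp_nocc.
have := faithfulX Hwf Hcomp Hrec (F := Lp (fam1 theta n)) (G := fam1 theta n.+1) _ hb.
apply => x hx; by rewrite Lp_eqX // !g_one.
Qed.

Definition ind a (s : {perm seq_sub (infl n a)}) : Fam n := dfwith (fam1 theta n) s.

Lemma ind_hom a (s t : {perm seq_sub (infl n a)}) : ind (s * t)%g = famM (ind s) (ind t).
Proof.
apply: fam_ext => c; rewrite /famM /ind.
case: (eqVneq a c) => [<-|ne]; first by rewrite !dfwith_in.
by rewrite !dfwith_out // /fam1 mulg1.
Qed.

Lemma Lp_even (F : Fam n) : (forall a, ~~ odd_perm (F a)) -> forall b, ~~ odd_perm (Lp F b).
Proof.
move=> HF b.
pose fp (l : seq A) := foldr (fun a acc => famM (ind (F a)) acc) (fam1 theta n) l.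
have hfp : forall l, uniq l -> forall c, fp l c = if c \in l then F c else 1%g.
  elim=> [|a l IH] //= /andP [ha hl] c.
  rewrite /famM IH // /ind in_cons.
  case: (eqVneq c a) => [e|ne].
    by subst c; rewrite dfwith_in (negbTE ha) mulg1.
  by rewrite dfwith_out; [rewrite /fam1 mul1g | rewrite eq_sym].
have eF : F = fp (enum A) by apply: fam_ext => c; rewrite hfp ?enum_uniq // mem_enum.
rewrite eF; elim: (enum A) => [|a l IH] /=; first by rewrite Lp_one odd_perm1.
rewrite Lp_hom odd_permM (negbTE IH) addbF.
apply: (phi_even (phi := fun s => Lp (ind s) b)); last exact: HF.
by move=> s t; rewrite ind_hom Lp_hom.
Qed.

End Lift.

Local Close Scope ring_scope.

Section Main.
Variable A : finType.
Variable theta : A -> seq (seq A).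
Hypothesis Hwf : wf_subst theta.
Hypothesis Hcomp : compatible theta.
Hypothesis Hrec : recognisable theta.

Notation inX := (inX theta).
Notation Fam := (Fam theta).
Notation eqX := (eqX theta).
Notation even F := (forall a, ~~ odd_perm (F a)).

Lemma eqX_trans f g h : eqX f g -> eqX g h -> eqX f h.
Proof. by move=> H1 H2 x hx; rewrite H1 // H2. Qed.

Lemma eqX_sym f g : eqX f g -> eqX g f.
Proof. by move=> H x hx; rewrite H. Qed.

Lemma lift_le m : forall n, (n <= m)%N -> forall F : Fam n,
  exists G : Fam m, eqX (gprod G) (gprod F) /\ (even F -> even G).
Proof.
elim: m => [|m IH] n hn F.
  move: F; have -> : n = 0%N by lia.
  by move=> F; exists F.
case: (eqVneq n m.+1) => [e|ne].
  by move: F; rewrite e => F; exists F.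
have [G0 [h1 h2]] := IH n ltac:(lia) F.
exists (Lp Hwf Hcomp Hrec G0); split.
  exact: eqX_trans (Lp_eqX Hwf Hcomp Hrec G0) h1.
by move=> hF; apply: Lp_even; exact: h2.
Qed.

Lemma GammaN_le n m g : (n <= m)%N -> GammaN theta n g -> GammaN theta m g.
Proof.
move=> hnm [F hF]; have [G [h1 _]] := lift_le hnm F.
exists G; exact: eqX_trans hF (eqX_sym h1).
Qed.

Lemma AltN_le n m g : (n <= m)%N -> AltN theta n g -> AltN theta m g.
Proof.
move=> hnm [F [hev hF]]; have [G [h1 h2]] := lift_le hnm F.
exists G; split; [exact: h2 | exact: eqX_trans hF (eqX_sym h1)].
Qed.

Lemma famM_even n (F G : Fam n) : even F -> even G -> even (famM F G).
Proof. by move=> h1 h2 a; rewrite /famM odd_permM (negbTE (h1 a)) (negbTE (h2 a)). Qed.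

Lemma famV_even n (F : Fam n) : even F -> even (famV F).
Proof. by move=> h a; rewrite /famV odd_permV. Qed.

Lemma Alt_comp g h : Alt theta g -> Alt theta h -> Alt theta (g \o h).
Proof.
move=> [n [hn hg]] [m [hm hh]].
have [F [hF eF]] := AltN_le (leq_maxl n m) hg.
have [G [hG eG]] := AltN_le (leq_maxr n m) hh.
exists (maxn n m); split; first by lia.
exists (famM G F); split; first exact: famM_even.
move=> x hx /=; rewrite eG // eF; last exact (g_inX Hwf Hcomp Hrec _ hx).
exact: g_comp.
Qed.

Lemma Alt_inv g : Alt theta g ->
  exists h, Alt theta h /\ eqX (h \o g) id /\ eqX (g \o h) id.
Proof.
move=> [n [hn [F [hF eF]]]].
exists (gprod (famV F)); split.
  exists n; split => //; exists (famV F); split => //; exact: famV_even.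
split => x hx /=.
  rewrite eF //; exact: g_inv.
rewrite eF; last exact (g_inX Hwf Hcomp Hrec _ hx).
exact: g_inv'.
Qed.

Lemma Alt_normal g g' h : Gamma theta g -> eqX (g' \o g) id -> eqX (g \o g') id ->
  Alt theta h -> Alt theta (g \o h \o g').
Proof.
move=> [n hg] e1 e2 [m [hm hh]].
have [F eF] := GammaN_le (leq_maxl n m) hg.
have [H [hH eH]] := AltN_le (leq_maxr n m) hh.
exists (maxn n m); split; first by lia.
exists (famM (famM (famV F) H) F); split.
  move=> a; rewrite /famM !odd_permM odd_permV; move: (hH a).
  by case: (odd_perm (H a)); case: (odd_perm (F a)).
move=> x hx /=.
set z := gprod (famV F) x.
have hz : inX z by exact (g_inX Hwf Hcomp Hrec _ hx).
have gz : g z = x by rewrite eF // g_inv'.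
have ez : g' x = z by rewrite -gz; exact: e1.
rewrite ez eH // eF; last exact (g_inX Hwf Hcomp Hrec _ hz).
rewrite !g_comp //; congr gprod; apply: fam_ext => a; by rewrite /famM mulgA.
Qed.

Definition Eqv g c := exists h, Alt theta h /\ eqX g (c \o h).

Definition valid (cs : seq ((int -> A) -> (int -> A))) :=
  (forall c, List.In c cs -> Gamma theta c) /\
  (forall i j, (i < j < size cs)%N -> ~ Eqv (nth id cs j) (nth id cs i)).

Lemma In_nth (T : Type) (x0 : T) (s : seq T) i : (i < size s)%N -> List.In (nth x0 s i) s.
Proof.
elim: s i => [|x s IH] [|i] //= hi; first by left.
by right; apply: IH.
Qed.

Lemma common_level (cs : seq ((int -> A) -> (int -> A))) :
  (forall c, List.In c cs -> Gamma theta c) ->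
  exists N, (1 <= N)%N /\ forall c, List.In c cs -> GammaN theta N c.
Proof.
elim: cs => [|c cs IH] H; first by exists 1%N.
have [N [hN HN]] := IH (fun c' h => H c' (or_intror h)).
have [n hn] := H c (or_introl erefl).
exists (maxn n N); split; first by lia.
move=> c' [<-|hc']; first exact: GammaN_le (leq_maxl n N) hn.
exact: GammaN_le (leq_maxr n N) (HN c' hc').
Qed.

Lemma valid_bound cs : valid cs -> (size cs <= 2 ^ #|A|)%N.
Proof.
move=> [hG hP].
have [N [hN HN]] := common_level hG.
pose k := size cs.
pose fi (i : 'I_k) : Fam N := epsilon (inhabits (fam1 theta N)) (fun F => eqX (nth id cs i) (gprod F)).
have hfi : forall i : 'I_k, eqX (nth id cs i) (gprod (fi i)).
  move=> i; apply: (epsilon_spec (inhabits (fam1 theta N)) (fun F => eqX (nth id cs i) (gprod F))).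
  exact: HN (In_nth id (ltn_ord i)).
pose pv (i : 'I_k) : {ffun A -> bool} := [ffun a => odd_perm (fi i a)].
have inj : injective pv.
  suff H : forall i j : 'I_k, (i < j)%N -> pv i = pv j -> False.
    move=> i j e; apply: val_inj; case: (ltngtP i j) => // h.
      by case: (H _ _ h e).
    by case: (H _ _ h (esym e)).
  move=> i j hij e; apply: (hP i j); first by rewrite hij ltn_ord.
  pose Hf : Fam N := fun a => (fi j a * (fi i a)^-1)%g.
  exists (gprod Hf); split.
    exists N; split => //; exists Hf; split => // a.
    rewrite /Hf odd_permM odd_permV.
    have := congr1 (fun f : {ffun A -> bool} => f a) e; rewrite /pv !ffunE => ->.
    by case: (odd_perm (fi j a)).
  move=> x hx /=; rewrite (hfi j) // (hfi i); last exact (g_inX Hwf Hcomp Hrec _ hx).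
  rewrite g_comp //; congr gprod; apply: fam_ext => a.
  by rewrite /famM /Hf mulgKV.
have := leq_card pv inj; rewrite card_ord card_ffun card_bool.
by [].
Qed.

Lemma index_bound : exists cs : seq ((int -> A) -> (int -> A)),
     (size cs <= 2 ^ #|A|)%N /\ (forall c, List.In c cs -> Gamma theta c) /\
     forall g, Gamma theta g ->
       exists c h, List.In c cs /\ Alt theta h /\ eqX g (c \o h).
Proof.
apply: NNPP => Hn.
suff H : forall k, exists cs, valid cs /\ size cs = k.
  have [cs [hv hs]] := H (2 ^ #|A|).+1.
  have := valid_bound hv; rewrite hs; lia.
elim=> [|k [cs [[hG hP] hs]]].
  by exists [::]; split => //; split => // i j; rewrite /= andbF.
have : ~ (forall g, Gamma theta g -> exists c h, List.In c cs /\ Alt theta h /\ eqX g (c \o h)).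
  move=> Hc; apply: Hn; exists cs; split; first by apply: valid_bound; split.
  by split.
move=> /not_all_ex_not [g Hg]; have [hg hng] := imply_to_and _ _ Hg.
exists (rcons cs g); split; last by rewrite size_rcons hs.
split.
  move=> c hc; have : List.In c (cs ++ [:: g]) by rewrite cats1.
  move=> /(List.in_app_or cs [:: g] c) [hc2|[ec|[]]]; [exact: hG | by rewrite -ec].
move=> i j; rewrite size_rcons => /andP [hij hj].
rewrite !nth_rcons.
have hi : (i < size cs)%N by lia.
rewrite hi.
case: (ltnP j (size cs)) => hj'.
  by apply: hP; rewrite hij.
have -> : j = size cs by lia.
rewrite eqxx => [[h [hh eh]]].
apply: hng; exists (nth id cs i), h; split => //; exact: In_nth.
Qed.

End Main.

Theorem lemma3p11 (A : finType) (theta : A -> seq (seq A)) :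
  wf_subst theta -> compatible theta -> recognisable theta ->
  (* A_n is contained in A_{n+1} *)
  (forall n : nat, (1 <= n)%N ->
     forall g, AltN theta n g -> AltN theta n.+1 g) /\
  (* A is a subgroup of Gamma *)
  (forall g, Alt theta g -> Gamma theta g) /\
  Alt theta id /\
  (forall g h, Alt theta g -> Alt theta h -> Alt theta (g \o h)) /\
  (forall g, Alt theta g ->
     exists h, Alt theta h /\ eqX theta (h \o g) id /\ eqX theta (g \o h) id) /\
  (* A is normal in Gamma *)
  (forall g g' h, Gamma theta g -> eqX theta (g' \o g) id -> eqX theta (g \o g') id ->
     Alt theta h -> Alt theta (g \o h \o g')) /\
  (* the index of A in Gamma is at most 2^d *)
  (exists cs : seq ((int -> A) -> (int -> A)),
     (size cs <= 2 ^ #|A|)%N /\ (forall c, List.In c cs -> Gamma theta c) /\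
     forall g, Gamma theta g ->
       exists c h, List.In c cs /\ Alt theta h /\ eqX theta g (c \o h)).
Proof.
move=> Hwf Hcomp Hrec.
split.
  move=> n _ g; apply: (AltN_le Hwf Hcomp Hrec); exact: leqnSn.
split.
  by move=> g [n [_ [F [_ eF]]]]; exists n, F.
split.
  exists 1%N; split => //; exists (fam1 theta 1); split.
    by move=> a; rewrite /fam1 odd_perm1.
  by move=> x hx; rewrite g_one.
split; first exact: (Alt_comp Hwf Hcomp Hrec).
split; first exact: (Alt_inv Hwf Hcomp Hrec).
split; first exact: (Alt_normal Hwf Hcomp Hrec).
exact: (index_bound Hwf Hcomp Hrec).
Qed.
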